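(* The set $$S=\{(p,q)\in(0,1)^2:\ \mathbb{P}^{(1,1)}_{p,q}(\tau=+\infty)>0\}$$ is an open subset of $(0,1)^2$.
   Context: Cooperative model: for $p,q\in(0,1)$, a Markov chain $(X_n,Y_n)_{n\ge0}$ on $\mathbb{N}^2$ whose transition law from state $(x,y)$ is $\mu_{(x,y)}=\mathrm{Bin}(2,q)^{*(x+y)}\otimes\mathrm{Bin}(2,p)^{*\min(x,y)}$, i.e. given the past, $X_{n+1}\sim\mathrm{Bin}(2(X_n+Y_n),q)$ and $Y_{n+1}\sim\mathrm{Bin}(2\min(X_n,Y_n),p)$ are independent. $\mathbb{P}^{(x,y)}_{p,q}$ denotes the law of this process started from $(x,y)$. $Z_n=\min(X_n,Y_n)$ and $\tau=\inf\{n\ge0: Z_n=0\}$. *)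

(* Defs.v *)
From Stdlib Require Import Reals Arith.
From Coquelicot Require Import Coquelicot.
Open Scope R_scope.

Definition binom_pmf (N : nat) (r : R) (k : nat) : R :=
  if Nat.leb k N then Binomial.C N k * r ^ k * (1 - r) ^ (N - k) else 0.

(* Transition probability of the cooperative chain:
   mu_(x,y)(x',y') = Bin(2(x+y),q)(x') * Bin(2 min(x,y),p)(y')
   (Bin(2,q)^{*(x+y)} = Bin(2(x+y),q), Bin(2,p)^{*min(x,y)} = Bin(2 min(x,y),p)). *)
Definition trans (p q : R) (x y x' y' : nat) : R :=
  binom_pmf (2 * (x + y)) q x' * binom_pmf (2 * Nat.min x y) p y'.

(* surv p q n x y = P^{(x,y)}_{p,q}(tau > n) = P(Z_0 > 0, ..., Z_n > 0),
   computed by the first-step (Markov) decomposition; the sums range over the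
   support {0..2(x+y)} x {0..2 min(x,y)} of mu_(x,y). *)
Fixpoint surv (p q : R) (n x y : nat) : R :=
  if Nat.eqb (Nat.min x y) 0 then 0 else
  match n with
  | O => 1
  | S m =>
      sum_f_R0 (fun x' =>
        sum_f_R0 (fun y' => trans p q x y x' y' * surv p q m x' y')
          (2 * Nat.min x y))
        (2 * (x + y))
  end.

(* P^{(x,y)}_{p,q}(tau = +oo) = lim_n P(tau > n)  (continuity from above;
   the sequence is nonincreasing in [0,1], so the limit exists). *)
Definition survival_prob (p q : R) (x y : nat) : R :=
  real (Lim_seq (fun n => surv p q n x y)).

Definition S_set (p q : R) : Prop :=
  0 < p < 1 /\ 0 < q < 1 /\ 0 < survival_prob p q 1 1.

(* Main.v *)
Require Import Defs.
From Stdlib Require Import Reals Lra Lia Arith FunctionalExtensionality Classical_Prop.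
From Coquelicot Require Import Coquelicot.
Open Scope R_scope.

Lemma C_pos n k : 0 < Binomial.C n k.
Proof. unfold Binomial.C. apply Rdiv_lt_0_compat. apply INR_fact_lt_0.
  apply Rmult_lt_0_compat; apply INR_fact_lt_0. Qed.

Lemma binom_nonneg N r k : 0 <= r <= 1 -> 0 <= binom_pmf N r k.
Proof. intros Hr. unfold binom_pmf. destruct (Nat.leb k N); [|lra].
  apply Rmult_le_pos; [apply Rmult_le_pos|]. left; apply C_pos.
  apply pow_le; lra. apply pow_le; lra. Qed.

Definition E (N : nat) (r : R) (h : nat -> R) : R :=
  sum_f_R0 (fun k => binom_pmf N r k * h k) N.

Lemma E_ext N r h h' : (forall k, (k <= N)%nat -> h k = h' k) -> E N r h = E N r h'.
Proof. intros H. unfold E. apply sum_eq. intros i Hi. rewrite H; auto. Qed.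

Lemma E_plus N r f g : E N r (fun k => f k + g k) = E N r f + E N r g.
Proof. unfold E. rewrite <- plus_sum. apply sum_eq. intros; ring. Qed.

Lemma E_scal N r c f : E N r (fun k => c * f k) = c * E N r f.
Proof. unfold E. rewrite scal_sum. apply sum_eq. intros; ring. Qed.

Lemma E_scalr N r c f : E N r (fun k => f k * c) = E N r f * c.
Proof. unfold E. rewrite Rmult_comm, scal_sum. apply sum_eq. intros; ring. Qed.

Lemma E_mono N r f g : 0 <= r <= 1 -> (forall k, (k <= N)%nat -> f k <= g k) ->
  E N r f <= E N r g.
Proof. intros Hr H. unfold E. apply sum_Rle. intros n Hn.
  apply Rmult_le_compat_l. apply binom_nonneg; auto. auto. Qed.

Lemma E_const N r c : E N r (fun _ => c) = c.
Proof. unfold E. rewrite <- scal_sum.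
  assert (H : sum_f_R0 (fun k => binom_pmf N r k) N = 1).
  { replace 1 with ((r + (1 - r)) ^ N). rewrite binomial. apply sum_eq. intros i Hi. unfold binom_pmf.
    apply Nat.leb_le in Hi. rewrite Hi. reflexivity.
    replace (r + (1-r)) with 1 by ring. apply pow1. }
  rewrite (sum_eq _ (fun k => binom_pmf N r k)) by (intros; ring). rewrite H. ring. Qed.

Lemma E_0 r h : E 0 r h = h 0%nat.
Proof. unfold E, binom_pmf. simpl. rewrite C_n_0. ring. Qed.

Lemma sum_split_last (f : nat -> R) N : sum_f_R0 f (S N) = sum_f_R0 f N + f (S N).
Proof. reflexivity. Qed.

Lemma binom_rec N r k :
  binom_pmf (S N) r k =
  (1 - r) * binom_pmf N r k + r * (match k with O => 0 | S j => binom_pmf N r j end).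
Proof.
  unfold binom_pmf. destruct k as [|j].
  - simpl. rewrite !C_n_0. rewrite Nat.sub_0_r. ring.
  - destruct (Nat.leb (S j) (S N)) eqn:E1.
    + apply Nat.leb_le in E1. assert (Hj : (j <= N)%nat) by lia.
      apply Nat.leb_le in Hj as Hj'. rewrite Hj'.
      destruct (Nat.leb (S j) N) eqn:E2.
      * apply Nat.leb_le in E2. rewrite <- pascal by lia.
        replace (S N - S j)%nat with (S (N - S j)) by lia.
        replace (N - j)%nat with (S (N - S j)) by lia. simpl. ring.
      * apply Nat.leb_gt in E2. assert (j = N) by lia. subst j.
        rewrite !Nat.sub_diag, !C_n_n. simpl. ring.
    + apply Nat.leb_gt in E1. destruct (Nat.leb (S j) N) eqn:E2.
      apply Nat.leb_le in E2; lia.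
      destruct (Nat.leb j N) eqn:E3. apply Nat.leb_le in E3; lia. ring.
Qed.

Lemma E_pascal N r h :
  E (S N) r h = (1 - r) * E N r h + r * E N r (fun k => h (S k)).
Proof.
  unfold E. rewrite (sum_eq _ (fun k => (binom_pmf N r k * h k) * (1 - r) +
     ((match k with O => 0 | S j => binom_pmf N r j end) * h k) * r)).
  2:{ intros. rewrite binom_rec. ring. }
  rewrite plus_sum, <- !scal_sum. f_equal.
  - f_equal. rewrite sum_split_last. unfold binom_pmf at 2.
    replace (Nat.leb (S N) N) with false. ring. symmetry; apply Nat.leb_gt; lia.
  - f_equal. rewrite decomp_sum by lia. simpl pred. ring.
Qed.

Lemma E_pascal' N r h :
  E (S N) r h = E N r (fun k => (1 - r) * h k + r * h (S k)).
Proof. rewrite E_pascal, E_plus, !E_scal. reflexivity. Qed.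

Lemma E_conv N1 N2 r h :
  E (N1 + N2) r h = E N1 r (fun i => E N2 r (fun j => h (i + j)%nat)).
Proof.
  revert h. induction N2 as [|N2 IH]; intros h.
  - rewrite Nat.add_0_r. apply E_ext. intros. rewrite E_0, Nat.add_0_r. reflexivity.
  - rewrite Nat.add_succ_r, E_pascal', IH. apply E_ext. intros i _.
    rewrite E_pascal'. apply E_ext. intros j _. rewrite Nat.add_succ_r. reflexivity.
Qed.

Lemma E_incr N N' r h : 0 <= r <= 1 -> (forall k, h k <= h (S k)) -> (N <= N')%nat ->
  E N r h <= E N' r h.
Proof.
  intros Hr Hh HN. induction HN. lra.
  eapply Rle_trans. apply IHHN. rewrite E_pascal'.
  apply E_mono; auto. intros k _. specialize (Hh k). assert (0 <= r * (h (S k) - h k)) by (apply Rmult_le_pos; lra). nra.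
Qed.

Lemma E_decr N N' r h : 0 <= r <= 1 -> (forall k, h (S k) <= h k) -> (N <= N')%nat ->
  E N' r h <= E N r h.
Proof.
  intros Hr Hh HN. induction HN. lra.
  eapply Rle_trans. 2: apply IHHN. rewrite E_pascal'.
  apply E_mono; auto. intros k _. specialize (Hh k). assert (0 <= r * (h k - h (S k))) by (apply Rmult_le_pos; lra). nra.
Qed.

Lemma sum_nonneg (f : nat -> R) N : (forall k, (k <= N)%nat -> 0 <= f k) -> 0 <= sum_f_R0 f N.
Proof. induction N; intros Hf. simpl; apply Hf; lia.
  rewrite sum_split_last. assert (0 <= sum_f_R0 f N) by (apply IHN; intros; apply Hf; lia).
  specialize (Hf (S N) (le_n _)). lra. Qed.

Lemma sum_ge_term (f : nat -> R) N i : (forall k, (k <= N)%nat -> 0 <= f k) -> (i <= N)%nat ->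
  f i <= sum_f_R0 f N.
Proof.
  induction N; intros Hf Hi.
  - assert (i = 0%nat) by lia. subst. simpl. lra.
  - rewrite sum_split_last. destruct (Nat.eq_dec i (S N)).
    + subst. assert (0 <= sum_f_R0 f N).
      { apply sum_nonneg. intros; apply Hf; lia. } lra.
    + assert (f i <= sum_f_R0 f N) by (apply IHN; [intros; apply Hf; lia | lia]).
      specialize (Hf (S N) (le_n _)). lra.
Qed.

Lemma E_ge_term N r h i : 0 <= r <= 1 -> (forall k, (k <= N)%nat -> 0 <= h k) -> (i <= N)%nat ->
  binom_pmf N r i * h i <= E N r h.
Proof. intros Hr Hh Hi. unfold E. apply (sum_ge_term (fun k => binom_pmf N r k * h k)); auto.
  intros k Hk. apply Rmult_le_pos; auto. apply binom_nonneg; auto. Qed.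

Lemma E_delta0 N r : E N r (fun k => if Nat.eqb k 0 then 1 else 0) = (1 - r) ^ N.
Proof.
  induction N. rewrite E_0. simpl. ring.
  rewrite E_pascal. rewrite IHN. rewrite (E_ext _ _ _ (fun _ => 0)). rewrite E_const. simpl. ring.
  intros; reflexivity.
Qed.

Lemma binom_top N r : binom_pmf N r N = r ^ N.
Proof. unfold binom_pmf. rewrite Nat.leb_refl, C_n_n, Nat.sub_diag. simpl. ring. Qed.
Definition T p q (g : nat -> nat -> R) x y :=
  E (2 * (x + y)) q (fun a => E (2 * Nat.min x y) p (fun b => g a b)).
Definition I0 (x y : nat) : R := if Nat.eqb (Nat.min x y) 0 then 0 else 1.
Fixpoint iterT p q n g := match n with O => g | S m => T p q (iterT p q m g) end.

Lemma surv_y0 p q m a : surv p q m a 0 = 0.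
Proof. destruct m; simpl; rewrite Nat.min_0_r; reflexivity. Qed.

Lemma surv_S p q m x y : surv p q (S m) x y = T p q (surv p q m) x y.
Proof.
  simpl surv at 1. unfold T. destruct (Nat.eqb (Nat.min x y) 0) eqn:Hm.
  - apply Nat.eqb_eq in Hm. rewrite Hm. simpl (2 * 0)%nat.
    rewrite (E_ext _ _ _ (fun _ => 0)). rewrite E_const; reflexivity.
    intros k _. rewrite E_0. apply surv_y0.
  - unfold E. apply sum_eq. intros a _. rewrite scal_sum. apply sum_eq. intros b _.
    unfold trans. ring.
Qed.

Lemma surv_iter p q n : surv p q n = iterT p q n I0.
Proof. induction n; apply functional_extensionality; intro x; apply functional_extensionality; intro y.
  reflexivity. rewrite surv_S. simpl. rewrite IHn. reflexivity. Qed.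

Lemma iterT_add p q n m g : iterT p q (n + m) g = iterT p q n (iterT p q m g).
Proof. induction n; simpl; [reflexivity| rewrite IHn; reflexivity]. Qed.

Section TP.
Variables p q : R.
Hypothesis Hp : 0 <= p <= 1.
Hypothesis Hq : 0 <= q <= 1.

Lemma T_mono g h : (forall x y, g x y <= h x y) -> forall x y, T p q g x y <= T p q h x y.
Proof. intros H x y. unfold T. apply E_mono; auto. intros a _. apply E_mono; auto. Qed.

Lemma T_lin c1 c2 g h x y : T p q (fun a b => c1 * g a b + c2 * h a b) x y =
  c1 * T p q g x y + c2 * T p q h x y.
Proof. unfold T. rewrite <- !E_scal, <- E_plus. apply E_ext. intros.
  rewrite <- !E_scal, <- E_plus. reflexivity. Qed.

Lemma T_const c x y : T p q (fun _ _ => c) x y = c.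
Proof. unfold T. rewrite (E_ext _ _ _ (fun _ => c)). apply E_const. intros; apply E_const. Qed.

Lemma iterT_mono n g h : (forall x y, g x y <= h x y) -> forall x y, iterT p q n g x y <= iterT p q n h x y.
Proof. induction n; intros H x y; simpl; auto. apply T_mono. auto. Qed.

Lemma iterT_lin n c1 c2 g h : iterT p q n (fun a b => c1 * g a b + c2 * h a b) =
  fun x y => c1 * iterT p q n g x y + c2 * iterT p q n h x y.
Proof. induction n; simpl. reflexivity. rewrite IHn.
  apply functional_extensionality; intro x; apply functional_extensionality; intro y.
  apply T_lin. Qed.

Lemma iterT_const n c : iterT p q n (fun _ _ => c) = fun _ _ => c.
Proof. induction n; simpl. reflexivity. rewrite IHn.
  apply functional_extensionality; intro x; apply functional_extensionality; intro y.
  apply T_const. Qed.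

Definition monot (g : nat -> nat -> R) := forall x y, g x y <= g (S x) y /\ g x y <= g x (S y).

Lemma monot_le g : monot g -> forall x y x' y', (x <= x')%nat -> (y <= y')%nat -> g x y <= g x' y'.
Proof. intros H x y x' y' Hx Hy. apply Rle_trans with (g x' y).
  induction Hx. lra. eapply Rle_trans. apply IHHx. apply H.
  induction Hy. lra. eapply Rle_trans. apply IHHy. apply H. Qed.

Lemma T_monot g : monot g -> monot (T p q g).
Proof.
  intros H x y. unfold T.
  assert (Hg : forall M M' N N', (N <= N')%nat -> (M <= M')%nat ->
     E N q (fun a => E M p (fun b => g a b)) <= E N' q (fun a => E M' p (fun b => g a b))).
  { intros M M' N N' HN HM. apply Rle_trans with (E N q (fun a => E M' p (fun b => g a b))).
    apply E_mono; auto. intros a _. apply E_incr; auto. intros; apply H.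
    apply E_incr; auto. intros a. apply E_mono; auto. intros; apply H. }
  split; apply Hg; lia.
Qed.

Lemma iterT_monot n g : monot g -> monot (iterT p q n g).
Proof. induction n; simpl; auto. intros; apply T_monot; auto. Qed.

Lemma I0_le x y x' y' : (x <= x')%nat -> (y <= y')%nat -> I0 x y <= I0 x' y'.
Proof. intros. unfold I0. destruct (Nat.eqb_spec (Nat.min x y) 0); destruct (Nat.eqb_spec (Nat.min x' y') 0);
  try lra. exfalso; lia. Qed.

Lemma I0_monot : monot I0.
Proof. intros x y. split; apply I0_le; lia. Qed.

Lemma surv_monot n : monot (surv p q n).
Proof. rewrite surv_iter. apply iterT_monot, I0_monot. Qed.

Lemma surv_bounds n x y : 0 <= surv p q n x y <= 1.
Proof. rewrite surv_iter. split.
  - pose proof (iterT_mono n (fun _ _ => 0) I0) as H. rewrite iterT_const in H. apply H.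
    intros; unfold I0; destruct Nat.eqb; lra.
  - pose proof (iterT_mono n I0 (fun _ _ => 1)) as H. rewrite iterT_const in H. apply H.
    intros; unfold I0; destruct Nat.eqb; lra. Qed.

End TP.
Section SP.
Variables p q : R.
Hypothesis Hp : 0 <= p <= 1.
Hypothesis Hq : 0 <= q <= 1.

Lemma T_compl g x y : T p q (fun a b => 1 - g a b) x y = 1 - T p q g x y.
Proof. replace (fun a b => 1 - g a b) with (fun a b => 1 * (fun _ _ : nat => 1) a b + (-1) * g a b).
  rewrite T_lin, T_const by auto. ring.
  apply functional_extensionality; intro; apply functional_extensionality; intro. ring. Qed.

Lemma iterT_compl n g : iterT p q n (fun a b => 1 - g a b) = fun x y => 1 - iterT p q n g x y.
Proof. replace (fun a b => 1 - g a b) with (fun a b => 1 * (fun _ _ : nat => 1) a b + (-1) * g a b).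
  rewrite iterT_lin, iterT_const by auto.
  apply functional_extensionality; intro; apply functional_extensionality; intro. ring.
  apply functional_extensionality; intro; apply functional_extensionality; intro. ring. Qed.

Definition G n x y := 1 - surv p q n x y.

Lemma G_S n x y : G (S n) x y = T p q (G n) x y.
Proof. unfold G. rewrite surv_S, T_compl. reflexivity. Qed.

Lemma G_bounds n x y : 0 <= G n x y <= 1.
Proof. unfold G. pose proof (surv_bounds p q Hp Hq n x y). lra. Qed.

Lemma G_anti n x y x' y' : (x <= x')%nat -> (y <= y')%nat -> G n x' y' <= G n x y.
Proof. intros. unfold G. pose proof (monot_le _ (surv_monot p q Hp Hq n) x y x' y'). 
  assert (surv p q n x y <= surv p q n x' y') by auto. lra. Qed.

Lemma G_submult n : forall x1 y1 x2 y2,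
  G n (x1 + x2) (y1 + y2) <= G n x1 y1 * G n x2 y2.
Proof.
  induction n; intros x1 y1 x2 y2.
  - unfold G. simpl surv.
    destruct (Nat.eqb_spec (Nat.min (x1 + x2) (y1 + y2)) 0);
    destruct (Nat.eqb_spec (Nat.min x1 y1) 0);
    destruct (Nat.eqb_spec (Nat.min x2 y2) 0); try lra; exfalso; lia.
  - rewrite !G_S. unfold T.
    set (N1 := (2 * (x1 + y1))%nat). set (N2 := (2 * (x2 + y2))%nat).
    set (M1 := (2 * Nat.min x1 y1)%nat). set (M2 := (2 * Nat.min x2 y2)%nat).
    replace (2 * (x1 + x2 + (y1 + y2)))%nat with (N1 + N2)%nat by (unfold N1, N2; lia).
    apply Rle_trans with (E (N1 + N2) q (fun a => E (M1 + M2) p (fun b => G n a b))).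
    { apply E_mono; auto. intros a _. apply E_decr; auto.
      intros; apply G_anti; lia. unfold M1, M2; lia. }
    rewrite E_conv.
    apply Rle_trans with (E N1 q (fun a1 => E N2 q (fun a2 => E M1 p (fun b1 => E M2 p (fun b2 =>
       G n a1 b1 * G n a2 b2))))).
    { apply E_mono; auto. intros a1 _. apply E_mono; auto. intros a2 _.
      rewrite E_conv. apply E_mono; auto. intros b1 _. apply E_mono; auto. }
    rewrite <- E_scalr. apply Req_le. apply E_ext. intros a1 _.
    rewrite <- E_scal. apply E_ext. intros a2 _.
    rewrite <- E_scalr. apply E_ext. intros b1 _.
    rewrite <- E_scal. reflexivity.
Qed.

Lemma G_pow n k : (1 <= k)%nat -> G n k k <= G n 1 1 ^ k.
Proof.
  induction k; intros Hk. lia. destruct k. simpl. lra.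
  replace (S (S k)) with (S k + 1)%nat by lia.
  eapply Rle_trans. apply G_submult.
  replace (S k + 1)%nat with (S (S k)) by lia. simpl pow.
  pose proof (G_bounds n 1 1). assert (G n (S k) (S k) <= G n 1 1 ^ S k) by (apply IHk; lia).
  pose proof (G_bounds n (S k) (S k)). simpl pow in H0. nra.
Qed.

Lemma surv_1_le x y : surv p q 1 x y <= I0 x y.
Proof. pose proof (surv_bounds p q Hp Hq 1 x y). unfold I0.
  destruct (Nat.eqb (Nat.min x y) 0) eqn:Hm; [|lra].
  simpl surv. rewrite Hm. lra. Qed.

Lemma surv_add n m : surv p q (n + m) = iterT p q n (surv p q m).
Proof. rewrite !surv_iter, iterT_add. reflexivity. Qed.

Lemma surv_Sle n x y : surv p q (S n) x y <= surv p q n x y.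
Proof. replace (S n) with (n + 1)%nat by lia. rewrite surv_add, (surv_iter p q n).
  apply iterT_mono; auto. apply surv_1_le. Qed.

Lemma surv_anti n n' x y : (n <= n')%nat -> surv p q n' x y <= surv p q n x y.
Proof. induction 1. lra. eapply Rle_trans. apply surv_Sle. auto. Qed.

Lemma G_add n m : G (n + m) = iterT p q n (G m).
Proof. unfold G. rewrite surv_add. rewrite iterT_compl. reflexivity. Qed.

Lemma surv_1_kill x y : surv p q 1 x y <= 1 - (1 - p) ^ (2 * Nat.min x y).
Proof.
  rewrite surv_S. unfold T.
  rewrite <- (E_const (2 * (x + y)) q (1 - (1 - p) ^ (2 * Nat.min x y))).
  apply E_mono; auto. intros a _.
  rewrite <- E_delta0. 
  replace (1 - E (2 * Nat.min x y) p (fun k => if Nat.eqb k 0 then 1 else 0))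
   with (E (2 * Nat.min x y) p (fun k => 1 - if Nat.eqb k 0 then 1 else 0)).
  2:{ replace (fun k => 1 - (if Nat.eqb k 0 then 1 else 0)) with
       (fun k => (fun _ => 1) k + (-1) * (if Nat.eqb k 0 then 1 else 0)).
      rewrite E_plus, E_scal, E_const. ring.
      apply functional_extensionality; intro; ring. }
  apply E_mono; auto. intros b _. simpl surv. unfold I0.
  destruct (Nat.eqb_spec b 0). subst. rewrite Nat.min_0_r. simpl. lra.
  destruct (Nat.eqb (Nat.min a b) 0); lra.
Qed.

End SP.
Section Cont.
Context {U : UniformSpace}.
Lemma cm (f g : U -> R) x : continuous f x -> continuous g x -> continuous (fun z => f z * g z) x.
Proof. intros. apply (continuous_mult f g); auto. Qed.
Lemma cp (f g : U -> R) x : continuous f x -> continuous g x -> continuous (fun z => f z + g z) x.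
Proof. intros. apply (continuous_plus f g); auto. Qed.
Lemma cmi (f g : U -> R) x : continuous f x -> continuous g x -> continuous (fun z => f z - g z) x.
Proof. intros. apply (continuous_minus f g); auto. Qed.
Lemma cc (c : R) x : continuous (fun _ : U => c) x.
Proof. apply continuous_const. Qed.
Lemma cpow (f : U -> R) x m : continuous f x -> continuous (fun z => f z ^ m) x.
Proof. intros H. induction m; simpl. apply cc. apply cm; auto. Qed.
Lemma cbinom (r : U -> R) x N k : continuous r x -> continuous (fun z => binom_pmf N (r z) k) x.
Proof. intros H. unfold binom_pmf. destruct (Nat.leb k N). apply cm. apply cm. apply cc. apply cpow; auto.
  apply cpow. apply cmi. apply cc. auto. apply cc. Qed.
Lemma csum (F : U -> nat -> R) x N : (forall k, continuous (fun z => F z k) x) ->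
  continuous (fun z => sum_f_R0 (F z) N) x.
Proof. intros H. induction N; simpl. auto. apply cp; auto. Qed.
Lemma cE (r : U -> R) (f : U -> nat -> R) x N : continuous r x -> (forall k, continuous (fun z => f z k) x) ->
  continuous (fun z => E N (r z) (f z)) x.
Proof. intros Hr Hf. unfold E. apply (csum (fun z k => binom_pmf N (r z) k * f z k)).
  intros k. apply cm. apply cbinom; auto. auto. Qed.
End Cont.

Lemma c_iterT h n a b : forall x y, continuous (fun z : R * R => iterT (fst z) (snd z) n h x y) (a, b).
Proof.
  induction n; intros x y; simpl. apply cc.
  unfold T. apply (cE (fun z : R*R => snd z) (fun z a0 => E (2 * Nat.min x y) (fst z) (fun b0 => iterT (fst z) (snd z) n h a0 b0))).
  apply continuous_snd. intros k. apply (cE (fun z : R*R => fst z)). apply continuous_fst. intros; apply IHn.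
Qed.

Lemma cont_eps (F : R*R -> R) p q : continuous F (p,q) -> forall eps, 0 < eps -> exists d, 0 < d /\ forall p' q', Rabs (p'-p) < d -> Rabs (q'-q) < d -> Rabs (F (p',q') - F (p,q)) < eps.
Proof.
intros H eps He. apply filterlim_locally with (eps := mkposreal eps He) in H.
destruct H as [d Hd]. exists d. split. apply cond_pos. intros p' q' H1 H2. apply (Hd (p',q')). split; simpl; assumption. Qed.
Definition Kf (k x y : nat) : R := if Nat.leb (2 * k) (Nat.min x y) then 1 else 0.
Definition Jf (k x y : nat) : R :=
  if Nat.eqb (Nat.min x y) 0 then 0 else if Nat.leb (2 * k) (Nat.min x y) then 0 else 1.

Lemma I0_JK k x y : (1 <= k)%nat -> I0 x y = 1 * Jf k x y + 1 * Kf k x y.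
Proof. intros Hk. unfold I0, Jf, Kf.
  destruct (Nat.eqb_spec (Nat.min x y) 0); destruct (Nat.leb_spec (2 * k) (Nat.min x y)); try ring.
  exfalso; lia. Qed.

Lemma pow_le_anti x m n : 0 <= x <= 1 -> (m <= n)%nat -> x ^ n <= x ^ m.
Proof. intros Hx H. induction H. lra. simpl. eapply Rle_trans. 2: apply IHle.
  pose proof (pow_le x m0 (proj1 Hx)). nra. Qed.

Lemma lim_facts (u : nat -> R) : (forall n, u (S n) <= u n) -> (forall n, 0 <= u n <= 1) ->
  (forall n, real (Lim_seq u) <= u n) /\ (forall c, (forall n, c <= u n) -> c <= real (Lim_seq u)).
Proof.
  intros Hd Hb.
  assert (H0 : Rbar_le (Lim_seq (fun _ => 0)) (Lim_seq u)).
  { apply Lim_seq_le_loc. exists 0%nat. intros; apply Hb. }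
  assert (H1 : Rbar_le (Lim_seq u) (Lim_seq (fun _ => 1))).
  { apply Lim_seq_le_loc. exists 0%nat. intros; apply Hb. }
  rewrite Lim_seq_const in H0, H1.
  pose proof (Lim_seq_correct u (ex_lim_seq_decr u Hd)) as HL.
  destruct (Lim_seq u) as [l| |] eqn:HE; simpl in H0, H1; try contradiction.
  split.
  - intros n. simpl. apply (is_lim_seq_decr_compare u l HL Hd).
  - intros c Hc. assert (H2 : Rbar_le (Lim_seq (fun _ => c)) (Lim_seq u)).
    { apply Lim_seq_le_loc. exists 0%nat. intros; apply Hc. }
    rewrite Lim_seq_const, HE in H2. simpl in H2. simpl. exact H2.
Qed.

Section Main.
Variables p q : R.
Hypothesis Hp : 0 <= p <= 1.
Hypothesis Hq : 0 <= q <= 1.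

Lemma crit_survive k n : (1 <= k)%nat -> iterT p q n (Kf k) k k > 2/3 ->
  forall m, 1/2 <= surv p q m k k.
Proof.
  intros Hk Ha.
  assert (Hn : (1 <= n)%nat).
  { destruct n. simpl in Ha. unfold Kf in Ha. rewrite Nat.min_id in Ha.
    destruct (Nat.leb_spec (2 * k) k). lia. lra. lia. }
  assert (HG : forall j, G p q (j * n) k k <= 1/2).
  { induction j.
    - simpl. unfold G. simpl surv. rewrite Nat.min_id.
      destruct (Nat.eqb_spec k 0). lia. lra.
    - set (e := G p q (j * n) k k) in *.
      assert (Hb : forall x y, G p q (j * n) x y <= 1 * (fun _ _ => 1) x y + (- (1 - e^2)) * Kf k x y).
      { intros x y. unfold Kf. destruct (Nat.leb_spec (2 * k) (Nat.min x y)).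
        - eapply Rle_trans. apply (G_anti p q Hp Hq _ (k + k) (k + k)); lia.
          eapply Rle_trans. apply G_submult; auto. fold e. lra.
        - pose proof (G_bounds p q Hp Hq (j * n) x y). lra. }
      replace (S j * n)%nat with (n + j * n)%nat by lia. rewrite G_add by auto.
      eapply Rle_trans. apply (iterT_mono p q Hp Hq n _ _ Hb).
      rewrite iterT_lin, iterT_const by auto.
      pose proof (G_bounds p q Hp Hq (j * n) k k). fold e in H.
      assert (1 - e^2 >= 3/4) by nra. nra. }
  intros m. assert (H := HG m). unfold G in H.
  pose proof (surv_anti p q Hp Hq m (m * n) k k). 
  assert (surv p q (m * n) k k <= surv p q m k k) by (apply H0; nia). lra.
Qed.

Lemma k_le_pow k : (k <= 2 ^ k)%nat.
Proof. induction k. simpl; lia. rewrite Nat.pow_succ_r'. assert (2 ^ k <> 0)%nat by (apply Nat.pow_nonzero; lia). lia. Qed.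

Lemma reach (Hp' : 0 < p) (Hq' : 0 < q) t : exists c, 0 < c /\
  forall m, c * surv p q m (2 ^ t) (2 ^ t) <= surv p q (t + m) 1 1.
Proof.
  induction t.
  - exists 1. split. lra. intros m. simpl. lra.
  - destruct IHt as [c [Hc H]]. set (z := (2 ^ t)%nat) in *.
    exists (c * (q ^ (4 * z) * p ^ (2 * z))). split.
    { apply Rmult_lt_0_compat; auto. apply Rmult_lt_0_compat; apply pow_lt; auto. }
    intros m. replace (S t + m)%nat with (t + S m)%nat by lia.
    eapply Rle_trans. 2: apply H. rewrite Rmult_assoc. apply Rmult_le_compat_l. lra.
    rewrite surv_S. unfold T. rewrite Nat.min_id.
    replace (2 * (z + z))%nat with (4 * z)%nat by lia.
    eapply Rle_trans. 2: apply E_ge_term with (i := (4 * z)%nat); auto.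
    rewrite binom_top. rewrite Rmult_assoc. apply Rmult_le_compat_l. apply pow_le; lra.
    eapply Rle_trans. 2: apply E_ge_term with (i := (2 * z)%nat); auto.
    rewrite binom_top. apply Rmult_le_compat_l. apply pow_le; lra.
    replace (2 ^ S t)%nat with (2 * z)%nat by (unfold z; simpl; lia).
    apply (monot_le _ (surv_monot p q Hp Hq m)); lia.
    all: try lia.
    all: intros.
    all: try apply (surv_bounds p q Hp Hq).
    rewrite <- (E_const (2 * z) p 0). apply E_mono; auto. intros; apply (surv_bounds p q Hp Hq).
Qed.

End Main.
Lemma surv_lim_facts p q x y : 0 <= p <= 1 -> 0 <= q <= 1 ->
  (forall n, survival_prob p q x y <= surv p q n x y) /\
  (forall c, (forall n, c <= surv p q n x y) -> c <= survival_prob p q x y).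
Proof. intros Hp Hq. apply lim_facts. intros; apply surv_Sle; auto. intros; apply surv_bounds; auto. Qed.

Lemma survive_from_crit p q k n : 0 < p < 1 -> 0 < q < 1 -> (1 <= k)%nat ->
  iterT p q n (Kf k) k k > 2/3 -> 0 < survival_prob p q 1 1.
Proof.
  intros Hp Hq Hk Ha.
  assert (Hp0 : 0 <= p <= 1) by lra. assert (Hq0 : 0 <= q <= 1) by lra.
  pose proof (crit_survive p q Hp0 Hq0 k n Hk Ha) as Hs.
  destruct (reach p q Hp0 Hq0 (proj1 Hp) (proj1 Hq) k) as [c [Hc Hr]].
  apply Rlt_le_trans with (c / 2). lra.
  apply (surv_lim_facts p q 1 1 Hp0 Hq0). intros N.
  eapply Rle_trans. 2: apply (surv_anti p q Hp0 Hq0 N (k + N)); lia.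
  eapply Rle_trans. 2: apply Hr.
  specialize (Hs N). 
  assert (surv p q N k k <= surv p q N (2 ^ k) (2 ^ k)).
  { apply (monot_le _ (surv_monot p q Hp0 Hq0 N)); apply k_le_pow. }
  nra.
Qed.

Lemma crit_from_S p q : S_set p q -> exists k n, (1 <= k)%nat /\ iterT p q n (Kf k) k k > 2/3.
Proof.
  intros [Hp [Hq Hs]].
  assert (Hp0 : 0 <= p <= 1) by lra. assert (Hq0 : 0 <= q <= 1) by lra.
  set (s := survival_prob p q 1 1) in *.
  destruct (surv_lim_facts p q 1 1 Hp0 Hq0) as [Hle _].
  fold s in Hle.
  assert (Hs1 : s <= 1) by (specialize (Hle 0%nat); simpl in Hle; lra).
  destruct (pow_lt_1_zero (1 - s)) with (y := 1/10) as [K0 HK0].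
  { rewrite Rabs_right; lra. } lra.
  set (k := S K0).
  assert (Hk : (1 <= k)%nat) by (unfold k; lia).
  assert (Hsk : forall n, 9/10 <= surv p q n k k).
  { intros n. pose proof (G_pow p q Hp0 Hq0 n k Hk).
    assert (G p q n 1 1 <= 1 - s) by (unfold G; specialize (Hle n); lra).
    assert (G p q n 1 1 ^ k <= (1 - s) ^ k).
    { apply pow_incr. split. apply G_bounds; auto. auto. }
    specialize (HK0 k ltac:(unfold k; lia)). rewrite Rabs_right in HK0.
    unfold G in *. lra. apply Rle_ge, pow_le; lra. }
  set (c := (1 - p) ^ (4 * k)).
  assert (Hc : 0 < c) by (apply pow_lt; lra).
  assert (Hstep : forall n, c * iterT p q n (Jf k) k k <= surv p q n k k - surv p q (S n) k k).
  { intros n. replace (S n) with (n + 1)%nat by lia. rewrite surv_add, (surv_iter p q n) by auto.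
    assert (Hb : forall x y, surv p q 1 x y <= 1 * I0 x y + (- c) * Jf k x y).
    { intros x y. unfold Jf. 
      destruct (Nat.eqb_spec (Nat.min x y) 0).
      - pose proof (surv_1_le p q Hp0 Hq0 x y). unfold I0 in *. rewrite e in *. simpl in *. lra.
      - destruct (Nat.leb_spec (2 * k) (Nat.min x y)).
        + pose proof (surv_1_le p q Hp0 Hq0 x y). lra.
        + pose proof (surv_1_kill p q Hp0 Hq0 x y).
          assert ((1 - p) ^ (4 * k) <= (1 - p) ^ (2 * Nat.min x y)) by (apply pow_le_anti; [lra | lia]).
          unfold I0. destruct (Nat.eqb_spec (Nat.min x y) 0). contradiction. fold c in H1. lra. }
    pose proof (iterT_mono p q Hp0 Hq0 n _ _ Hb k k) as H. rewrite iterT_lin in H by auto. lra. }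
  assert (Hex : exists n, iterT p q n (Jf k) k k < 1/10).
  { destruct (Classical_Prop.classic (exists n, iterT p q n (Jf k) k k < 1/10)) as [H|H]. exact H.
    exfalso.
    assert (Hall : forall n, 1/10 <= iterT p q n (Jf k) k k).
    { intros n. destruct (Rlt_le_dec (iterT p q n (Jf k) k k) (1/10)). exfalso; apply H; exists n; auto. auto. }
    assert (Hind : forall N, surv p q N k k <= 1 - INR N * (c / 10)).
    { induction N. simpl. pose proof (surv_bounds p q Hp0 Hq0 0 k k). lra.
      rewrite S_INR. specialize (Hstep N). specialize (Hall N). nra. }
    destruct (INR_unbounded (10 / c)) as [N HN].
    specialize (Hind N). pose proof (surv_bounds p q Hp0 Hq0 N k k).
    assert (INR N * (c / 10) > 1).
    { apply Rmult_gt_compat_r with (r := c / 10) in HN. 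
      replace (10 / c * (c / 10)) with 1 in HN by (field; lra). lra. apply Rdiv_lt_0_compat; lra. }
    lra. }
  destruct Hex as [n Hn]. exists k, n. split; auto.
  assert (HI : iterT p q n I0 k k = iterT p q n (Jf k) k k + iterT p q n (Kf k) k k).
  { replace I0 with (fun x y => 1 * Jf k x y + 1 * Kf k x y).
    rewrite iterT_lin by auto. ring.
    apply functional_extensionality; intro; apply functional_extensionality; intro.
    symmetry; apply I0_JK; auto. }
  rewrite <- surv_iter in HI. specialize (Hsk n). lra.
Qed.

Theorem theorem6 :
  forall p q : R, S_set p q ->
    exists eps : R, 0 < eps /\
      forall p' q' : R, 0 < p' < 1 -> 0 < q' < 1 ->
        Rabs (p' - p) < eps -> Rabs (q' - q) < eps -> S_set p' q'.
Proof.
  intros p q HS.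
  destruct (crit_from_S p q HS) as [k [n [Hk Ha]]].
  set (F := fun z : R * R => iterT (fst z) (snd z) n (Kf k) k k).
  destruct (cont_eps F p q (c_iterT (Kf k) n p q k k) (iterT p q n (Kf k) k k - 2/3)) as [d [Hd Hc]].
  lra.
  exists d. split; auto. intros p' q' Hp' Hq' H1 H2.
  specialize (Hc p' q' H1 H2). unfold F in Hc. simpl in Hc.
  split; auto. split; auto.
  apply (survive_from_crit p' q' k n); auto.
  apply Rabs_def2 in Hc. lra.
Qed.
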